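(* Let $\Gamma$ be a finite simple graph with a linear order on $V(\Gamma)$, and let $g_1,g_2\in G(\Gamma)$ be such that $g_1g_2$ is geodesic, i.e. $|g_1g_2|=|g_1|+|g_2|$. (i) If $g_2$ is SD-conical, then $\sigma(g_1g_2)\equiv\sigma(g_1)\sigma(g_2)$. (ii) If $g_1$ is SD-conical and strongly non-split, then $g_1g_2$ is also SD-conical and strongly non-split.
   Context: $G(\Gamma)=\langle v\in V(\Gamma)\mid [v_i,v_j]=1 \text{ if } \{v_i,v_j\}\notin E(\Gamma)\rangle$. $|g|$ is word length; a reduced word is a shortest representative; $\mathrm{supp}(g)$ is the set of generators $v$ with $v^{\pm1}$ appearing in a reduced word for $g$; $w_1\equiv w_2$ means equality of words letter by letter. $g_1,g_2$ disjointly commute if their supports are disjoint and each $v_1\in\mathrm{supp}(g_1)$ commutes with each $v_2\in\mathrm{supp}(g_2)$ (i.e. $\{v_1,v_2\}\notin E(\Gamma)$). $g$ is non-split if $\mathrm{supp}(g)$ spans a connected subgraph; strongly non-split if non-split and no generator disjointly commutes with $g$. $S(g)$ is the set of $v\in V(\Gamma)$ such that some reduced word for $g$ begins with $v$ or $v^{-1}$. $g$ is conical if $S(g)$ is a single generator $v_0$, called its apex. A conical $g$ is SD-conical if its apex $v_0$ does not commute with any generator smaller than $v_0$, i.e. $v<v_0$ implies $\{v,v_0\}\in E(\Gamma)$. CGW-normal form: a reduced word $w\equiv v_{i_1}^{\epsilon_1}\cdots v_{i_k}^{\epsilon_k}$ representing $g$ is initially normal if it is empty or $v_{i_1}$ is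 the largest element of $S(g)$; it is normal if all its suffixes are initially normal. Every $g$ has a unique normal representative word, denoted $\sigma(g)$. *)

(* Defs.v *)
From HB Require Import structures.
From mathcomp Require Import all_boot all_order.
From mathcomp Require Import boolp classical_sets.
From Stdlib Require Import Relations.
Set Implicit Arguments. Unset Strict Implicit. Unset Printing Implicit Defensive.
Import Order.TTheory.
Local Open Scope order_scope.

Section RAAG.
Variables (d : Order.disp_t) (T : finOrderType d) (e : rel T).
(* e is the edge relation of the simple graph Gamma; generators commute
   iff they are NOT adjacent. *)

(* A letter (v, b) stands for v if b = false and v^{-1} if b = true. *)
Definition letter := (T * bool)%type.
Definition word := seq letter.

Inductive wstep : word -> word -> Prop :=
| wstep_cancel (a b : word) (x : letter) :
    wstep (a ++ [:: x; (x.1, ~~ x.2)] ++ b) (a ++ b)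
| wstep_comm (a b : word) (x y : letter) :
    ~~ e x.1 y.1 -> wstep (a ++ [:: x; y] ++ b) (a ++ [:: y; x] ++ b).

Definition weq : word -> word -> Prop := clos_refl_sym_trans word wstep.

Definition reduced (w : word) : Prop :=
  forall w', weq w w' -> size w <= size w'.

Lemma wlen_ex (w : word) :
  exists n, `[< exists w', weq w w' /\ size w' = n >].
Proof. exists (size w); apply: asboolT; exists w; split => //; exact: rst_refl. Qed.

Definition wlen (w : word) : nat := ex_minn (wlen_ex w).

Definition supp (w : word) : {set T} :=
  [set v | `[< exists w', [/\ weq w w', reduced w' & v \in map fst w'] >]].

Definition Sfirst (w : word) : {set T} :=
  [set v | `[< exists w', [/\ weq w w', reduced w' & ohead (map fst w') = Some v] >]].

Definition dcommute (w1 w2 : word) : Prop :=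
  [disjoint supp w1 & supp w2] /\
  forall v1 v2, v1 \in supp w1 -> v2 \in supp w2 -> ~~ e v1 v2.

Definition span_connected (A : {set T}) : Prop :=
  forall u v, u \in A -> v \in A ->
    connect (fun a b => [&& a \in A, b \in A & e a b]) u v.

Definition nonsplit (w : word) : Prop := span_connected (supp w).

Definition strongly_nonsplit (w : word) : Prop :=
  nonsplit w /\ forall v : T, ~ dcommute [:: (v, false)] w.

Definition conical_with_apex (w : word) (v0 : T) : Prop := Sfirst w = [set v0].

Definition conical (w : word) : Prop := exists v0, conical_with_apex w v0.

Definition SDconical (w : word) : Prop :=
  exists v0, conical_with_apex w v0 /\ forall v, v < v0 -> e v v0.

Definition initially_normal (w : word) : Prop :=
  match w with
  | [::] => True
  | x :: _ => x.1 \in Sfirst w /\ forall v, v \in Sfirst w -> v <= x.1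
  end.

Definition normal (w : word) : Prop :=
  reduced w /\ forall n, initially_normal (drop n w).

(* sigma(g): the (unique) normal word representing the element of w. *)
Definition sigma (w : word) : word :=
  xget [::] (fun s => normal s /\ weq w s).

End RAAG.

(* Main.v *)
Require Import Defs.
From mathcomp Require Import all_boot all_order.
From mathcomp Require Import boolp.
From mathcomp Require classical_sets.
From Stdlib Require Import Relation_Operators.
Set Implicit Arguments. Unset Strict Implicit. Unset Printing Implicit Defensive.

Section Piling.
Variables (d : Order.disp_t) (T : finOrderType d) (e : rel T).
Hypotheses (e_sym : symmetric e) (e_irr : irreflexive e).

Local Notation word := (word T).
Local Notation letter := (letter T).

Definition linv (x : letter) : letter := (x.1, ~~ x.2).
Definition relv (a : T) (y : letter) := (y.1 == a) || e y.1 a.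
Definition ent (a : T) (y : letter) : option bool :=
  if y.1 == a then Some y.2 else None.
Definition pp (w : word) (a : T) : seq (option bool) :=
  [seq ent a y | y <- w & relv a y].
Definition state := T -> seq (option bool).
Definition dropl (s : seq (option bool)) := take (size s).-1 s.
Definition stp (st : state) (x : letter) : state := fun a =>
  if relv a x then
    (if last None (st x.1) == Some (~~ x.2) then dropl (st a)
     else rcons (st a) (ent a x))
  else st a.
Definition pil (w : word) : state := foldl stp (fun _ => [::]) w.

Lemma pp_cons y w a : pp (y :: w) a =
  if relv a y then ent a y :: pp w a else pp w a.
Proof. by rewrite /pp /=; case: ifP. Qed.

Lemma pp_cat u v a : pp (u ++ v) a = pp u a ++ pp v a.
Proof. by rewrite /pp filter_cat map_cat. Qed.

Lemma pp_rcons u x a : pp (rcons u x) a =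
  if relv a x then rcons (pp u a) (ent a x) else pp u a.
Proof. by rewrite /pp filter_rcons; case: ifP => //; rewrite map_rcons. Qed.

Lemma dropl_rcons s z : dropl (rcons s z) = s.
Proof. by rewrite /dropl size_rcons /= -cats1 take_size_cat. Qed.

Lemma relv_self x : relv x.1 x.
Proof. by rewrite /relv eqxx. Qed.

Lemma last_Some (s : seq (option bool)) b : last None s = Some b -> exists s', s = rcons s' (Some b).
Proof.
case/lastP: s => [//|s z]; rewrite last_rcons => ->; by exists s.
Qed.

Definition irr (a : T) := fun y : letter => ~~ relv a y.

Lemma F_last w a b : last None (pp w a) = Some b ->
  exists w1 w2, w = w1 ++ (a, b) :: w2 /\ all (irr a) w2.
Proof.
elim/last_ind: w => [//|w y IH]; rewrite pp_rcons.
case Hr: (relv a y).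
  rewrite last_rcons /ent; case: eqP => // <- [<-].
  exists w, [::]; split => //; by case: y {Hr} => ? ?; rewrite cats1.
case/IH => w1 [w2 [-> H]]; exists w1, (rcons w2 y); split.
  by rewrite rcons_cat.
by rewrite all_rcons /irr Hr.
Qed.

Lemma F_first w a b s : pp w a = Some b :: s ->
  exists w1 w2, w = w1 ++ (a, b) :: w2 /\ all (irr a) w1.
Proof.
elim: w s => [//|y w IH] s; rewrite pp_cons.
case Hr: (relv a y).
  rewrite /ent; case: eqP => // <- [<-] _.
  exists [::], w; split => //; by case: y {Hr}.
case/IH => w1 [w2 [-> H]]; exists (y :: w1), w2; split => //.
by rewrite /= /irr Hr.
Qed.

Lemma pp_irr_None w a c : all (irr a) w -> e c a ->
  pp w c = nseq (size (pp w c)) None.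
Proof.
move=> H eca; elim: w H => [//|y w IH] /= /andP [Hy Hw].
rewrite pp_cons; case: ifP => _ /=; last exact: IH.
rewrite {1}IH //; congr (_ :: _); rewrite /ent; case: eqP => // Ey.
by move: Hy; rewrite /irr /relv Ey eca orbT.
Qed.

Lemma pp_irr_nil w a : all (irr a) w -> pp w a = [::].
Proof.
elim: w => [//|y w IH] /= /andP [Hy Hw]; rewrite pp_cons.
by move: Hy; rewrite /irr => /negbTE ->; exact: IH.
Qed.

Lemma nseq_rcons (A : Type) n (z : A) : z :: nseq n z = rcons (nseq n z) z.
Proof. by elim: n => //= n ->. Qed.

Lemma J1pp u a b c : last None (pp u a) = Some b -> e a c ->
  exists s, pp u c = rcons s None.
Proof.
move=> /F_last [u1 [u2 [-> H]]] eac.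
rewrite pp_cat pp_cons /relv /= eac orbT.
have -> : ent c (a, b) = None by rewrite /ent /=; case: eqP => // E; move: eac; rewrite E e_irr.
rewrite (pp_irr_None H); last by rewrite e_sym.
by rewrite nseq_rcons -rcons_cat; eexists.
Qed.

Definition J0 (st : state) := forall a s1 s2 b,
  st a <> s1 ++ [:: Some b, Some (~~ b) & s2].

Definition Inv (st : state) := (exists u, st = pp u) /\ J0 st.

Lemma Inv_J1 st a b c : Inv st -> last None (st a) = Some b -> e a c ->
  exists s, st c = rcons s None.
Proof. by case=> [[u ->] _]; exact: J1pp. Qed.


Lemma stp_push u x : last None (pp u x.1) != Some (~~ x.2) ->
  stp (pp u) x = pp (rcons u x).
Proof.
move=> H; apply: funext => a; rewrite /stp pp_rcons (negbTE H).
by case: ifP.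
Qed.

Lemma stp_pop u x : last None (pp u x.1) = Some (~~ x.2) ->
  stp (pp u) x = pp (take (index (x.1, ~~ x.2) u) u) \/ True.
Proof. by right. Qed.

Lemma stp_pop' u x : last None (pp u x.1) = Some (~~ x.2) ->
  exists u1 u2, u = u1 ++ (x.1, ~~ x.2) :: u2 /\ stp (pp u) x = pp (u1 ++ u2).
Proof.
move=> H; have [u1 [u2 [Eu Hu2]]] := F_last H.
exists u1, u2; split => //.
apply: funext => a; rewrite /stp H eqxx Eu !pp_cat pp_cons.
have Er : relv a (x.1, ~~ x.2) = relv a x by [].
rewrite Er; case Hr: (relv a x) => //.
suff -> : ent a (x.1, ~~ x.2) :: pp u2 a = rcons (pp u2 a) (ent a (x.1, ~~ x.2)).
  by rewrite -rcons_cat dropl_rcons.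
case: (eqVneq x.1 a) => [<-|ne].
  by rewrite (pp_irr_nil Hu2).
have eax : e a x.1.
  by move: Hr; rewrite /relv (negbTE ne) /= e_sym.
have -> : ent a (x.1, ~~ x.2) = None by rewrite /ent /= (negbTE ne).
by rewrite (pp_irr_None Hu2 eax) nseq_rcons.
Qed.

Definition noP (s : seq (option bool)) := forall s1 s2 b,
  s <> s1 ++ [:: Some b, Some (~~ b) & s2].

Lemma noP_rcons s z : noP s ->
  (forall b, last None s = Some b -> z <> Some (~~ b)) -> noP (rcons s z).
Proof.
move=> H Hz s1 s2 b.
case/lastP: s2 => [|s2 w].
  rewrite (_ : s1 ++ _ = rcons (rcons s1 (Some b)) (Some (~~ b))); last by rewrite -!cats1 -catA.
  move/rcons_inj => [E1 E2].
  by apply: (Hz b); rewrite // E1 last_rcons.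
rewrite (_ : s1 ++ _ = rcons (s1 ++ [:: Some b, Some (~~ b) & s2]) w); last by rewrite rcons_cat.
move/rcons_inj => [E _].
exact: (H s1 s2 b).
Qed.

Lemma noP_dropl s : noP s -> noP (dropl s).
Proof.
move=> H s1 s2 b E; apply: (H s1 (s2 ++ drop (size s).-1 s) b).
by rewrite -[LHS](cat_take_drop (size s).-1) -/(dropl s) E -catA.
Qed.

Lemma Inv_stp st x : Inv st -> Inv (stp st x).
Proof.
case=> [[u ->] H0].
case C: (last None (pp u x.1) == Some (~~ x.2)).
  have [u1 [u2 [_ E]]] := stp_pop' (eqP C).
  split; first by exists (u1 ++ u2).
  move=> a; rewrite /stp C; case: ifP => _; last exact: H0.
  exact/noP_dropl/H0.
split; first by exists (rcons u x); apply: stp_push; rewrite C.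
move=> a; rewrite /stp C; case: ifP => _; last exact: H0.
apply: noP_rcons; first exact: H0.
move=> b Hb; rewrite /ent; case: eqP => // Ea [Eb].
by move: C; rewrite Ea Hb Eb negbK eqxx.
Qed.

Lemma Inv_pil w : Inv (pil w).
Proof.
elim/last_ind: w => [|w x IH].
  split; first by exists [::].
  by move=> a [|? ?] ? ?.
by rewrite /pil foldl_rcons; apply: Inv_stp.
Qed.

Lemma linvK x : linv (linv x) = x.
Proof. by case: x => a b; rewrite /linv /= negbK. Qed.

Lemma stp_cancel st x : Inv st -> stp (stp st x) (linv x) = st.
Proof.
move=> HI; apply: funext => a.
rewrite {1}/stp /linv /=.
have Er : relv a (x.1, ~~ x.2) = relv a x by [].
rewrite Er; case Hr: (relv a x); last by rewrite /stp Hr.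
case C: (last None (st x.1) == Some (~~ x.2)).
  have [s Es] := last_Some (eqP C).
  have Hs : last None s != Some x.2.
    apply/eqP => /last_Some [s' Es']; case: HI => _ /(_ x.1 s' [::] x.2); apply.
    by rewrite Es Es' -cats1 -cats1 -catA.
  rewrite {1}/stp relv_self C Es dropl_rcons negbK (negbTE Hs).
  rewrite /stp Hr C.
  case: (eqVneq x.1 a) => [Ea|ne].
    by rewrite -Ea Es dropl_rcons /ent eqxx.
  have eax : e x.1 a by move: Hr; rewrite /relv (negbTE ne).
  have [s2 Es2] := Inv_J1 HI (eqP C) eax.
  by rewrite Es2 dropl_rcons /ent /= (negbTE ne).
rewrite {1}/stp relv_self C last_rcons /ent eqxx negbK eqxx.
by rewrite /stp Hr C dropl_rcons.
Qed.

Lemma stpE st x a : stp st x a = if relv a x then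
    (if last None (st x.1) == Some (~~ x.2) then dropl (st a)
     else rcons (st a) (ent a x))
  else st a.
Proof. by []. Qed.

Lemma stp_comm st x y : Inv st -> ~~ e x.1 y.1 ->
  stp (stp st x) y = stp (stp st y) x.
Proof.
move=> HI nexy.
case: (eqVneq x.1 y.1) => [E1|ne].
  case: (eqVneq x.2 y.2) => [E2|ne2].
    by have -> : x = y by case: x y E1 E2 {nexy} => ? ? [? ?] /= -> ->.
  have Ey : y = linv x.
    by case: x y E1 ne2 {nexy} => a b [a' b'] /= -> /negPf; case: b; case: b'.
  rewrite Ey stp_cancel //.
  by have := stp_cancel (linv x) HI; rewrite linvK => ->.
have ryx : relv x.1 y = false.
  by rewrite /relv eq_sym (negbTE ne) /= e_sym (negbTE nexy).
have rxy : relv y.1 x = false.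
  by rewrite /relv (negbTE ne) /= (negbTE nexy).
have Sx : stp st y x.1 = st x.1 by rewrite /stp ryx.
have Sy : stp st x y.1 = st y.1 by rewrite /stp rxy.
apply: funext => a.
rewrite stpE [RHS]stpE Sx Sy !stpE.
case Hx: (relv a x); case Hy: (relv a y) => //.
have nax : x.1 != a by apply/eqP => E; move: Hy; rewrite -E ryx.
have nay : y.1 != a by apply/eqP => E; move: Hx; rewrite -E rxy.
have eax : e x.1 a by move: Hx; rewrite /relv (negbTE nax).
have eay : e y.1 a by move: Hy; rewrite /relv (negbTE nay).
rewrite /ent (negbTE nax) (negbTE nay).
case Cx: (last None (st x.1) == Some (~~ x.2));
case Cy: (last None (st y.1) == Some (~~ y.2)) => //.
  have [s Es] := Inv_J1 HI (eqP Cx) eax.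
  by rewrite Es !dropl_rcons.
have [s Es] := Inv_J1 HI (eqP Cy) eay.
by rewrite Es !dropl_rcons.
Qed.


Local Notation weq := (weq e).
Local Notation wstep := (wstep e).
Local Notation reduced := (reduced e).

Lemma weq_refl w : weq w w. Proof. exact: rst_refl. Qed.
Lemma weq_sym w w' : weq w w' -> weq w' w. Proof. exact: rst_sym. Qed.
Lemma weq_trans w1 w2 w3 : weq w1 w2 -> weq w2 w3 -> weq w1 w3.
Proof. exact: rst_trans. Qed.
Lemma weq_step w w' : wstep w w' -> weq w w'. Proof. exact: rst_step. Qed.

Lemma weq_map (f : word -> word) :
  (forall w w', wstep w w' -> wstep (f w) (f w')) ->
  forall w w', weq w w' -> weq (f w) (f w').
Proof.
move=> Hf w w'; elim => [x y H|x|x y _ IH|x y z _ IH1 _ IH2].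
- exact: weq_step (Hf _ _ H).
- exact: weq_refl.
- exact: weq_sym IH.
- exact: weq_trans IH1 IH2.
Qed.

Lemma wstep_catl c w w' : wstep w w' -> wstep (c ++ w) (c ++ w').
Proof.
case=> [a b x|a b x y H]; rewrite !(catA c a).
  exact: wstep_cancel.
exact: wstep_comm.
Qed.

Lemma wstep_catr c w w' : wstep w w' -> wstep (w ++ c) (w' ++ c).
Proof.
case=> [a b x|a b x y H]; rewrite -!catA.
  exact: (wstep_cancel e a (b ++ c) x).
exact: (wstep_comm a (b ++ c) H).
Qed.

Lemma weq_catl c w w' : weq w w' -> weq (c ++ w) (c ++ w').
Proof. apply: (weq_map (f := fun w => c ++ w)) => ? ?; exact: wstep_catl. Qed.

Lemma weq_catr c w w' : weq w w' -> weq (w ++ c) (w' ++ c).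
Proof. apply: (weq_map (f := fun w => w ++ c)) => ? ?; exact: wstep_catr. Qed.

Lemma weq_cat u u' v v' : weq u u' -> weq v v' -> weq (u ++ v) (u' ++ v').
Proof. move=> H1 H2; apply: weq_trans (weq_catr _ H1) (weq_catl _ H2). Qed.

Lemma pil_wstep w w' : wstep w w' -> pil w = pil w'.
Proof.
case=> [a b x|a b x y H]; rewrite /pil !foldl_cat /= -/(pil a).
  by rewrite (stp_cancel x (Inv_pil a)).
by rewrite stp_comm //; exact: Inv_pil.
Qed.

Lemma pil_weq w w' : weq w w' -> pil w = pil w'.
Proof. by elim => // [? ? /pil_wstep|? ? ? _ -> _ ->]. Qed.

Lemma redE r : reduced r <-> (forall w', weq r w' -> (size r <= size w')%N).
Proof. by []. Qed.

Lemma redP r w' : reduced r -> weq r w' -> (size r <= size w')%N.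
Proof. by move/redE; apply. Qed.

Lemma reduced_catl u v : reduced (u ++ v) -> reduced u.
Proof.
move=> H; apply/redE => u' /(weq_catr v) /(redP H); by rewrite !size_cat leq_add2r.
Qed.

Lemma reduced_catr u v : reduced (u ++ v) -> reduced v.
Proof.
move=> H; apply/redE => v' /(weq_catl u) /(redP H); by rewrite !size_cat leq_add2l.
Qed.

Lemma move_right (z : letter) p1 p2 c : all (irr z.1) p2 ->
  weq (p1 ++ z :: p2 ++ c) (p1 ++ p2 ++ z :: c).
Proof.
elim: p2 p1 => [|y p2 IH] p1 /=; first by move=> _; exact: weq_refl.
case/andP => Hy H.
apply: weq_trans (weq_step (wstep_comm p1 (p2 ++ c) _)) _.
  by move: Hy; rewrite /irr /relv negb_or e_sym => /andP [].
have := IH (rcons p1 y) H; by rewrite -!cats1 -!catA.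
Qed.

Lemma move_left (z : letter) w1 w2 : all (irr z.1) w1 ->
  weq (w1 ++ z :: w2) (z :: w1 ++ w2).
Proof.
elim: w1 => [|y w1 IH] /=; first by move=> _; exact: weq_refl.
case/andP => Hy H.
apply: weq_trans (weq_catl [:: y] (IH H)) _.
apply: weq_step; apply: (wstep_comm [::] (w1 ++ w2)).
by move: Hy; rewrite /irr /relv negb_or => /andP [].
Qed.

Lemma pil_reduced r : reduced r -> pil r = pp r.
Proof.
elim/last_ind: r => [//|p x IH] Hr.
have Hp : reduced p by move: Hr; rewrite -cats1 => /reduced_catl.
rewrite /pil foldl_rcons -/(pil p) IH //.
case C: (last None (pp p x.1) == Some (~~ x.2)); last by apply: stp_push; rewrite C.
have [p1 [p2 [Ep H]]] := F_last (eqP C).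
exfalso.
have W : weq (rcons p x) (p1 ++ p2).
  rewrite Ep -cats1 -catA /=.
  apply: weq_trans (move_right p1 (z := (x.1, ~~ x.2)) [:: x] H) _.
  have := wstep_cancel e (p1 ++ p2) [::] (linv x).
  change ((linv x).1, ~~ (linv x).2) with (linv (linv x)); rewrite linvK !cats0 -catA.
  exact: weq_step.
have := redP Hr W; rewrite Ep size_rcons !size_cat /=.
by move=> Hc; move: (leq_trans (leqnSn _) Hc); rewrite addnS ltnn.
Qed.

Lemma pp_weq r s : reduced r -> reduced s -> weq r s -> pp r = pp s.
Proof. by move=> Hr Hs /pil_weq; rewrite !pil_reduced. Qed.


Lemma wlen_spec w : exists w', weq w w' /\ size w' = wlen e w.
Proof. rewrite /wlen; case: ex_minnP => m /asboolP [w' [H1 H2]] _; by exists w'. Qed.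

Lemma wlen_le w w' : weq w w' -> (wlen e w <= size w')%N.
Proof.
move=> H; rewrite /wlen; case: ex_minnP => m _ Hmin; apply: Hmin.
by apply/asboolP; exists w'.
Qed.

Lemma reduced_size r w : reduced r -> weq w r -> size r = wlen e w.
Proof.
move=> Hr H; have [w' [H1 H2]] := wlen_spec w.
apply/eqP; rewrite eqn_leq wlen_le // andbT -H2.
apply: redP Hr _; exact: weq_trans (weq_sym H) H1.
Qed.

Lemma reduced_of_size w r : weq w r -> size r = wlen e w -> reduced r.
Proof.
move=> H E; apply/redE => s Hs; rewrite E; apply: wlen_le.
exact: weq_trans H Hs.
Qed.

Lemma reduced_same r s : reduced r -> weq r s -> size s = size r -> reduced s.
Proof.
move=> Hr H E; apply: (reduced_of_size H); rewrite E.
exact: reduced_size (weq_refl r).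
Qed.

Lemma red_ex w : exists r, weq w r /\ reduced r.
Proof.
have [w' [H1 H2]] := wlen_spec w; exists w'; split => //.
exact: reduced_of_size H1 H2.
Qed.

Lemma size_red_eq r s : reduced r -> reduced s -> weq r s -> size r = size s.
Proof.
move=> Hr Hs H; apply/eqP; rewrite eqn_leq (redP Hr H).
exact: redP Hs (weq_sym H).
Qed.

Lemma SfirstP v w : reflect
  (exists w', [/\ weq w w', reduced w' & ohead (map fst w') = Some v])
  (v \in Sfirst e w).
Proof. by rewrite inE; exact: asboolP. Qed.

Lemma Sfirst_weq w w' : weq w w' -> Sfirst e w = Sfirst e w'.
Proof.
move=> H; apply/setP => v; apply/SfirstP/SfirstP => [[u [H1 H2 H3]]|[u [H1 H2 H3]]].
  exists u; split => //; exact: weq_trans (weq_sym H) H1.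
exists u; split => //; exact: weq_trans H H1.
Qed.

Lemma Sfirst_head x t : reduced (x :: t) -> x.1 \in Sfirst e (x :: t).
Proof. move=> H; apply/SfirstP; exists (x :: t); split => //; exact: weq_refl. Qed.

Lemma mem_pp w a : (a \in map fst w) = has isSome (pp w a).
Proof.
elim: w => [//|y w IH]; rewrite pp_cons /= in_cons IH.
case Hr: (relv a y) => /=.
  by rewrite /ent eq_sym; case: eqP.
by move: Hr; rewrite /relv eq_sym; case: (a == y.1).
Qed.

Lemma pp_nil_all u a : pp u a = [::] -> all (irr a) u.
Proof.
elim: u => [//|y u IH]; rewrite pp_cons /=; case: ifP => // Hr /IH ->.
by rewrite /irr Hr.
Qed.

Lemma first_in_Sfirst w a b s : reduced w -> pp w a = Some b :: s ->
  a \in Sfirst e w.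
Proof.
move=> Hw /F_first [w1 [w2 [Ew H]]].
have W : weq w ((a, b) :: w1 ++ w2) by rewrite Ew; exact: move_left.
have R : reduced ((a, b) :: w1 ++ w2).
  apply: reduced_same Hw W _; by rewrite Ew /= !size_cat /= addnS.
rewrite (Sfirst_weq W); exact: (Sfirst_head R).
Qed.

Lemma lemK u v z : reduced (u ++ v) -> z \in Sfirst e (u ++ v) ->
  z \in Sfirst e u \/ (all (irr z) u /\ z \in Sfirst e v).
Proof.
move=> Huv /SfirstP [r [Hw Hr]]; case: r Hw Hr => [//|[a b] r'] Hw Hr /= [Ea]; subst a.
have := congr1 (fun f => f z) (pp_weq Hr Huv (weq_sym Hw)).
rewrite /= pp_cons pp_cat /relv /ent /= eqxx /=.
case Hu: (pp u z) => [|c s] /=.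
  move=> Hv; right; split; first exact: pp_nil_all.
  by apply: first_in_Sfirst (reduced_catr Huv) (esym Hv).
move=> [Ec _]; left; rewrite -Ec in Hu.
exact: first_in_Sfirst (reduced_catl Huv) Hu.
Qed.


Lemma max_seq (s : seq T) : s != [::] ->
  exists2 m, m \in s & forall v, v \in s -> (v <= m)%O.
Proof.
elim: s => [//|x s IH] _.
case: (eqVneq s [::]) => [->|ne].
  by exists x; rewrite ?mem_seq1 // => v; rewrite mem_seq1 => /eqP ->.
have [m Hm Hmax] := IH ne.
case: (Order.TotalTheory.leP x m) => Hxm.
  exists m; first by rewrite in_cons Hm orbT.
  by move=> v; rewrite in_cons => /orP [/eqP ->|/Hmax].
exists x; first by rewrite in_cons eqxx.
move=> v; rewrite in_cons => /orP [/eqP ->//|/Hmax Hv].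
exact: Order.POrderTheory.le_trans Hv (Order.POrderTheory.ltW Hxm).
Qed.

Lemma normalE s : normal e s <-> reduced s /\ forall n, initially_normal e (drop n s).
Proof. by []. Qed.

Lemma normal_tail x t : normal e (x :: t) -> normal e t.
Proof.
case/normalE => H1 H2; split; first exact: (reduced_catr (u := [:: x]) H1).
move=> n; exact: (H2 n.+1).
Qed.

Lemma normal_ex_aux n r : size r = n -> reduced r ->
  exists s, normal e s /\ weq r s.
Proof.
elim: n r => [|n IH] r.
  move/size0nil => -> H; exists [::]; split; last exact: weq_refl.
  by split => // -[|k].
case: r => [//|x t] [Hs] Hr.
have Hne : enum (Sfirst e (x :: t)) != [::].
  apply/eqP => E; have := Sfirst_head Hr; by rewrite -mem_enum E.
have [m Hm Hmax] := max_seq Hne.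
rewrite mem_enum in Hm.
case/SfirstP: Hm => r' [Hw Hr']; case: r' Hw Hr' => [//|y t'] Hw Hr' /= [Ey].
have St' : size t' = n.
  by have := size_red_eq Hr Hr' Hw => /= [[<-]].
have Rt' : reduced t' := reduced_catr (u := [:: y]) Hr'.
have [s' [Ns' Ws']] := IH t' St' Rt'.
have W : weq (x :: t) (y :: s') := weq_trans Hw (weq_catl [:: y] Ws').
have R : reduced (y :: s').
  apply: reduced_same Hr' (weq_catl [:: y] Ws') _ => /=.
  by rewrite (size_red_eq Rt' (proj1 Ns') Ws').
exists (y :: s'); split => //; split => // -[|k] /=; last exact: (proj2 Ns' k).
split; first exact: Sfirst_head.
move=> v; rewrite -(Sfirst_weq W) Ey => Hv; apply: Hmax; by rewrite mem_enum.
Qed.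

Lemma normal_ex w : exists s, normal e s /\ weq w s.
Proof.
have [r [Hwr Hr]] := red_ex w.
have [s [Ns Ws]] := normal_ex_aux (erefl (size r)) Hr.
exists s; split => //; exact: weq_trans Hwr Ws.
Qed.

Lemma weq_cancel_front x t : weq (linv x :: x :: t) t.
Proof.
have := wstep_cancel e [::] t (linv x).
change ((linv x).1, ~~ (linv x).2) with (linv (linv x)); rewrite linvK.
exact: weq_step.
Qed.

Lemma normal_uniq_aux n s1 s2 : size s1 = n -> normal e s1 -> normal e s2 ->
  weq s1 s2 -> s1 = s2.
Proof.
elim: n s1 s2 => [|n IH] s1 s2.
  move/size0nil => -> N1 N2 W.
  have := size_red_eq (proj1 N1) (proj1 N2) W.
  by case: s2 {N2 W}.
move=> Hs N1 N2 W.
have := size_red_eq (proj1 N1) (proj1 N2) W.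
case: s1 Hs N1 W => [//|x t1] [Hs] N1 W.
case: s2 N2 W => [//|y t2] N2 W _.
have [[Hx1 Hmx] _] : initially_normal e (x :: t1) /\ True by split => //; exact: (proj2 N1 0).
have [[Hy1 Hmy] _] : initially_normal e (y :: t2) /\ True by split => //; exact: (proj2 N2 0).
have ES := Sfirst_weq W.
have Exy1 : x.1 = y.1.
  apply: Order.POrderTheory.le_anti; apply/andP; split.
    by apply: Hmy; rewrite -ES.
  by apply: Hmx; rewrite ES.
have := congr1 (fun f => f x.1) (pp_weq (proj1 N1) (proj1 N2) W).
rewrite /= !pp_cons /relv -Exy1 eqxx /= /ent -Exy1 eqxx => -[E2 _].
have Exy : x = y by case: x y Exy1 E2 {Hx1 Hmx ES W N1 Hy1 Hmy N2} => ? ? [? ?] /= -> ->.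
subst y; congr (_ :: _).
apply: (IH t1 t2 Hs (normal_tail N1) (normal_tail N2)).
apply: weq_trans (weq_sym (weq_cancel_front x t1)) _.
apply: weq_trans _ (weq_cancel_front x t2).
exact: (weq_catl [:: linv x] W).
Qed.

Lemma normal_uniq s1 s2 : normal e s1 -> normal e s2 -> weq s1 s2 -> s1 = s2.
Proof. exact: normal_uniq_aux. Qed.

Lemma sigma_spec w : normal e (sigma e w) /\ weq w (sigma e w).
Proof.
rewrite /sigma; apply: (@classical_sets.xgetPex _ [::] (fun s => normal e s /\ weq w s)).
exact: normal_ex.
Qed.

Lemma sigma_eq w s : normal e s -> weq w s -> sigma e w = s.
Proof.
move=> Ns Ws; have [N1 W1] := sigma_spec w.
apply: normal_uniq N1 Ns _; exact: weq_trans (weq_sym W1) Ws.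
Qed.


Lemma suppP v w : reflect
  (exists w', [/\ weq w w', reduced w' & v \in map fst w']) (v \in supp e w).
Proof. by rewrite inE; exact: asboolP. Qed.

Lemma supp_red v w r : v \in supp e w -> reduced r -> weq w r -> v \in map fst r.
Proof.
case/suppP => w' [H1 H2 H3] Hr H.
rewrite mem_pp -(pp_weq H2 Hr (weq_trans (weq_sym H1) H)) -mem_pp //.
Qed.

Lemma supp_single u z : u \in supp e [:: (z, false)] -> u = z.
Proof.
case/suppP => w' [H1 H2 H3].
have := congr1 (fun f => f u) (pil_weq H1).
rewrite (pil_reduced H2) /pil /= stpE /=.
move=> Hpp; rewrite mem_pp -Hpp in H3; move: H3; case: ifP => _ //=.
by rewrite /ent /=; case: eqP => // -> _.
Qed.

Lemma irr_mem z r v : all (irr z) r -> v \in map fst r -> (v != z) && ~~ e v z.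
Proof.
move=> /allP H /mapP [y /H Hy ->]; by move: Hy; rewrite /irr /relv negb_or.
Qed.

Lemma cat_red w1 w2 r1 r2 : wlen e (w1 ++ w2) = wlen e w1 + wlen e w2 ->
  weq w1 r1 -> reduced r1 -> weq w2 r2 -> reduced r2 ->
  weq (w1 ++ w2) (r1 ++ r2) /\ reduced (r1 ++ r2).
Proof.
move=> Hl W1 R1 W2 R2; have W := weq_cat W1 W2; split => //.
apply: reduced_of_size W _.
by rewrite size_cat Hl (reduced_size R1 W1) (reduced_size R2 W2).
Qed.

Lemma disjI (A B : {set T}) : (forall x, x \in A -> x \in B -> False) ->
  [disjoint A & B].
Proof.
move=> H; rewrite disjoint_subset; apply/subsetP => x Hx; rewrite inE.
by apply/negP; exact: H.
Qed.

Lemma main (w1 w2 : word) :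
  wlen e (w1 ++ w2) = wlen e w1 + wlen e w2 ->
  (SDconical e w2 -> sigma e (w1 ++ w2) = sigma e w1 ++ sigma e w2) /\
  (SDconical e w1 -> strongly_nonsplit e w1 ->
     SDconical e (w1 ++ w2) /\ strongly_nonsplit e (w1 ++ w2)).
Proof.
move=> Hl; split.
  case=> v0 [Hc SD].
  have [N1 W1] := sigma_spec w1; have [N2 W2] := sigma_spec w2.
  have [W R] := cat_red Hl W1 (proj1 N1) W2 (proj1 N2).
  apply: sigma_eq W; split => // k.
  rewrite drop_cat; case: ifP => Hk; last exact: (proj2 N2 _).
  have := proj2 N1 k.
  have Rs : reduced (drop k (sigma e w1) ++ sigma e w2).
    by move: R; rewrite -{1}(cat_take_drop k (sigma e w1)) -catA => /reduced_catr.
  case Ed: (drop k (sigma e w1)) Rs => [|x s'] Rs; first by move=> _; have := proj2 N2 0; rewrite drop0.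
  move=> [Hx Hmx]; split; first exact: (Sfirst_head Rs).
  move=> v Hv; case: (lemK Rs Hv) => [Hv'|[Hirr Hv2]]; first exact: Hmx.
  move: Hv2; rewrite -(Sfirst_weq W2) Hc in_set1 => /eqP Ev; subst v.
  rewrite Order.TotalTheory.leNgt; apply/negP => Hlt.
  move: Hirr => /= /andP [+ _]; by rewrite /irr /relv SD // orbT.
case=> v0 [Hc SD] [NS1 NSc].
have : v0 \in Sfirst e w1 by rewrite /conical_with_apex in Hc; rewrite Hc set11.
case/SfirstP => r1 [W1 R1 H1].
have [r2 [W2 R2]] := red_ex w2.
have [W R] := cat_red Hl W1 R1 W2 R2.
have supp_sub : forall v, v \in supp e w1 -> v \in supp e (w1 ++ w2).
  move=> v /suppP [w' [H1' H2' H3']].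
  have [W' R'] := cat_red Hl H1' H2' W2 R2.
  by apply/suppP; exists (w' ++ r2); split => //; rewrite map_cat mem_cat H3'.
have dom : forall u, u \in supp e w1 \/ exists2 u', u' \in supp e w1 & e u u'.
  move=> u; case: (boolP (u \in supp e w1)) => Hu; first by left.
  right; case: (pselect (exists2 u', u' \in supp e w1 & e u u')) => // Hn.
  exfalso; apply: (NSc u); split.
    apply: disjI => a /supp_single -> Hb; by rewrite Hb in Hu.
  move=> v1 v2 /supp_single -> Hv2; apply/negP => Huv; apply: Hn; by exists v2.
split.
  exists v0; split => //; rewrite /conical_with_apex; apply/setP => z.
  rewrite in_set1 (Sfirst_weq W); apply/idP/eqP.
    case/(lemK R) => [|[Hirr _]].
      by rewrite -(Sfirst_weq W1) Hc in_set1 => /eqP.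
    exfalso; apply: (NSc z); split.
      apply: disjI => a /supp_single -> Hb.
      by have := irr_mem Hirr (supp_red Hb R1 W1); rewrite eqxx.
    move=> v1 v2 /supp_single -> Hv2.
    have := irr_mem Hirr (supp_red Hv2 R1 W1); rewrite e_sym => /andP [_ ->] //.
  move=> ->; apply/SfirstP; exists (r1 ++ r2); split => //; first exact: weq_refl.
  by case: r1 H1 {W1 R1 W R supp_sub} => [//|y r1'] /=.
split.
  move=> u v Hu Hv.
  set Rl := (fun a b => [&& a \in supp e (w1 ++ w2), b \in supp e (w1 ++ w2) & e a b]).
  have [u' Hu' Cu] : exists2 u', u' \in supp e w1 & connect Rl u u'.
    case: (dom u) => [Hu1|[u' Hu' Huu']]; first by exists u => //; exact: connect0.
    exists u' => //; apply: connect1; by rewrite /Rl Hu supp_sub.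
  have [v' Hv' Cv] : exists2 v', v' \in supp e w1 & connect Rl v' v.
    case: (dom v) => [Hv1|[v' Hv' Hvv']]; first by exists v => //; exact: connect0.
    exists v' => //; apply: connect1; by rewrite /Rl Hv supp_sub // e_sym.
  apply: connect_trans Cu _; apply: connect_trans _ Cv.
  apply: connect_sub (NS1 u' v' Hu' Hv') => a b /and3P [Ha Hb Hab].
  by apply: connect1; rewrite /Rl !supp_sub.
move=> v [Hdis Hcom]; apply: (NSc v); split.
  apply: disjI => a Ha Hb; by move: (supp_sub _ Hb); rewrite (disjointFr Hdis Ha).
move=> v1 v2 H1' H2'; exact: Hcom H1' (supp_sub _ H2').
Qed.

End Piling.

Theorem lemma2p9 (d : Order.disp_t) (T : finOrderType d) (e : rel T)
  (e_sym : symmetric e) (e_irr : irreflexive e) (w1 w2 : word T) :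
  wlen e (w1 ++ w2) = wlen e w1 + wlen e w2 ->
  (SDconical e w2 -> sigma e (w1 ++ w2) = sigma e w1 ++ sigma e w2) /\
  (SDconical e w1 -> strongly_nonsplit e w1 ->
     SDconical e (w1 ++ w2) /\ strongly_nonsplit e (w1 ++ w2)).
Proof. exact: main. Qed.
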